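(* Let $S$ be finite and $X\subset S^{\mathbb Z^d}$ a $\mathbb Z^d$-topological Markov shift satisfying condition $\maltese$. Then $X$ satisfies condition $\mho$.
   Context: Notation: $\|n\|=\max_k|n_k|$, $B(n,r)=\{k:\|k-n\|\le r\}$, $F^o=\{x\in F:B(x,1)\subset F\}$, $\partial F=F\setminus F^o$; $X_\Lambda=\{x_\Lambda:x\in X\}$. A $\mathbb Z^d$-TMS is $X=\{x\in S^{\mathbb Z^d}:(x_k,(x_{k+j})_{j\in\partial B(0,1)})\in A\ \forall k\}$ for some $A\subset S\times S^{\partial B(0,1)}$. Tail relation $\mathfrak T(X)=\{(x,y)\in X^2:\exists F\text{ finite},x_{F^c}=y_{F^c}\}$. Let $\sharp:S\to\mathbb Z^S$, $\sharp(s)=e_s$ (standard basis vector), $\Psi_\sharp(x,y)=\sum_j(e_{y_j}-e_{x_j})$ on $\mathfrak T(X)$, and for finite $F$, $a,b\in X_F$, $\Psi_\sharp(a,b)=\sum_{j\in F}(e_{b_j}-e_{a_j})$; $\mathbb H_{X,\sharp}$ is the subgroup generated by $\{\Psi_\sharp(x,y):(x,y)\in\mathfrak T(X)\}$. Condition $\mho$: there is a finite $F\subset\mathbb Z^d$ such that for every $a\in X_F$, the subgroup generated by $\{\Psi_\sharp(a,b):b\in X_F,\ a_{\partial F}=b_{\partial F}\}$ equals $\mathbb H_{X,\sharp}$. Condition $\maltese$: $S=W\uplus Z$ with $Z\neq\emptyset$ such that (i) for every $x\in X$ and $z\in Z$, the configuration $x'$ with $x'_i=x_i$ for $i\neq0$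 and $x'_0=z$ lies in $X$; and (ii) if $a\in X_{[-1,1]^d}$ and $a_i\in Z$ for all $i\in[-1,1]^d\setminus\{0\}$, then for every $s\in S$ the configuration $a^{(s)}$ with $a^{(s)}_i=a_i$ for $i\neq0$ and $a^{(s)}_0=s$ lies in $X_{[-1,1]^d}$. *)

(* Defs.v *)
From HB Require Import structures.
From mathcomp Require Import all_boot all_order all_algebra.
From mathcomp Require Import finmap.
Set Implicit Arguments.
Unset Strict Implicit.
Unset Printing Implicit Defensive.
Import Order.TTheory GRing.Theory Num.Theory.
Local Open Scope ring_scope.

Definition site (d : nat) := 'rV[int]_d.

Definition supnorm (d : nat) (n : site d) : nat := (\max_(k < d) absz (n ord0 k))%N.

Definition ball (d : nat) (n : site d) (r : nat) : site d -> Prop :=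
  fun k => (supnorm (k - n)%R <= r)%N.

Definition interior (d : nat) (F : site d -> Prop) : site d -> Prop :=
  fun x => F x /\ (forall k, ball x 1 k -> F k).
Definition boundary (d : nat) (F : site d -> Prop) : site d -> Prop :=
  fun x => F x /\ ~ interior F x.

Definition fmem (d : nat) (F : {fset site d}) : site d -> Prop := fun k => k \in F.

(* A subset of
   S × S^{dB(0,1)} is encoded as a predicate on S × (site d -> S) that only
   depends on the values at sites of dB(0,1) (condition [local_rule]). *)
Definition local_rule (S : finType) (d : nat) (A : S -> (site d -> S) -> Prop) :=
  forall s (f g : site d -> S),
    (forall j, boundary (ball 0 1) j -> f j = g j) -> (A s f <-> A s g).

Definition TMS (S : finType) (d : nat) (A : S -> (site d -> S) -> Prop)
  : (site d -> S) -> Prop :=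
  fun x => forall k : site d, A (x k) (fun j => x (k + j)).

Definition pattern_in (S : finType) (d : nat) (X : (site d -> S) -> Prop)
  (F : site d -> Prop) (a : site d -> S) : Prop :=
  exists x, X x /\ (forall j, F j -> x j = a j).

Definition sharp (S : finType) (s : S) : {ffun S -> int} :=
  [ffun t => ((t == s) : nat)%:Z].

Definition PsiF (S : finType) (d : nat) (F : {fset site d}) (a b : site d -> S)
  : {ffun S -> int} :=
  \sum_(j <- F) (sharp (b j) - sharp (a j)).

Inductive gen (V : zmodType) (P : V -> Prop) : V -> Prop :=
| gen_in : forall v, P v -> gen P v
| gen_0 : gen P 0
| gen_sub : forall u v, gen P u -> gen P v -> gen P (u - v).

Definition tail_rel (S : finType) (d : nat) (X : (site d -> S) -> Prop)
  (x y : site d -> S) : Prop :=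
  X x /\ X y /\ exists F : {fset site d}, forall j, j \notin F -> x j = y j.

(* H_{X,sharp}: generated by Psi_sharp(x,y) = sum_j (e_{y_j} - e_{x_j}),
   (x,y) in T(X); the sum is computed over any finite F off which x,y agree
   (all other terms vanish). *)
Definition H_sharp (S : finType) (d : nat) (X : (site d -> S) -> Prop)
  : {ffun S -> int} -> Prop :=
  gen (fun v => exists x y, X x /\ X y /\
         exists F : {fset site d},
           (forall j, j \notin F -> x j = y j) /\ v = PsiF F x y).

Definition cond_mho (S : finType) (d : nat) (X : (site d -> S) -> Prop) : Prop :=
  exists F : {fset site d},
    forall a, pattern_in X (fmem F) a ->
      forall v,
        gen (fun w => exists b, pattern_in X (fmem F) b /\
                (forall j, boundary (fmem F) j -> a j = b j) /\
                w = PsiF F a b) v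
        <-> H_sharp X v.

Definition cond_maltese (S : finType) (d : nat) (X : (site d -> S) -> Prop) : Prop :=
  exists Z : {set S}, Z != set0 /\
    (forall x (z : S), X x -> z \in Z ->
        X (fun i => if i == 0 then z else x i)) /\
    (forall a : site d -> S, pattern_in X (ball 0 1) a ->
        (forall i, ball 0 1 i -> i != 0 -> a i \in Z) ->
        forall s : S, pattern_in X (ball 0 1) (fun i => if i == 0 then s else a i)).

(* Main.v *)
Require Import Defs.
From mathcomp Require Import all_boot all_order all_algebra.
From mathcomp Require Import finmap zify.
From Stdlib Require Import FunctionalExtensionality.
Set Implicit Arguments. Unset Strict Implicit. Unset Printing Implicit Defensive.
Import Order.TTheory GRing.Theory Num.Theory.
Local Open Scope ring_scope.

Section S.
Variable d : nat.

Lemma supnorm_le (k : site d) i : (absz (k ord0 i) <= supnorm k)%N.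
Proof. by rewrite /supnorm (bigD1 i) //= leq_maxl. Qed.

Lemma supnormD (a b : site d) : (supnorm (a + b)%R <= supnorm a + supnorm b)%N.
Proof.
apply/bigmax_leqP => i _; rewrite mxE.
apply: leq_trans (leq_add (supnorm_le a i) (supnorm_le b i)).
by have := leqD_dist (a ord0 i) 0 (- b ord0 i); rewrite subr0 sub0r !opprK.
Qed.

Lemma supnormN (a : site d) : supnorm (- a) = supnorm a.
Proof. by apply: eq_bigr => i _; rewrite mxE abszN. Qed.

Lemma supnorm0 : supnorm (0 : site d) = 0%N.
Proof. by apply/eqP; rewrite -leqn0; apply/bigmax_leqP => i _; rewrite mxE. Qed.

Definition cube (r : nat) : {fset site d} :=
  seq_fset tt [seq (\row_(i < d) (((f i : nat)%:Z) - r%:Z)) : site d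
              | f : {ffun 'I_d -> 'I_(r + r)%N.+1} <- enum {ffun 'I_d -> 'I_(r + r)%N.+1}].

Lemma in_cube r k : (k \in cube r) = (supnorm k <= r)%N.
Proof.
rewrite seq_fsetE; apply/mapP/idP.
  move=> [f _ ->]; apply/bigmax_leqP => i _; rewrite mxE.
  have := ltn_ord (f i); move: (nat_of_ord (f i)) => n Hn.
  by case: (leqP r n) => h; [rewrite distnEl // | rewrite distnEr ?(ltnW h) //]; lia.
move=> H.
exists [ffun i => inord (absz (k ord0 i + r%:Z)) : 'I_(r + r)%N.+1]; first by rewrite mem_enum.
apply/rowP => i; rewrite !mxE ffunE.
have := supnorm_le k i; rewrite [k 0 i](_ : _ = k ord0 i) //; move=> Hi.
rewrite inordK; last by lia.
lia.
Qed.

Lemma cube0 r : (0 : site d) \in cube r.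
Proof. by rewrite in_cube supnorm0. Qed.

End S.

Section Gen.
Variable V : zmodType.
Variable P : V -> Prop.
Lemma gen_opp (v : V) : gen P v -> gen P (- v).
Proof. move=> h; rewrite -sub0r; exact: gen_sub (gen_0 _) h. Qed.
Lemma gen_add (u v : V) : gen P u -> gen P v -> gen P (u + v).
Proof. move=> hu hv; rewrite -[v]opprK; exact: gen_sub hu (gen_opp hv). Qed.
Lemma gen_sum (I : eqType) (r : seq I) (F : I -> V) :
  (forall i, i \in r -> gen P (F i)) -> gen P (\sum_(i <- r) F i).
Proof.
elim: r => [|x r IH] h; first by rewrite big_nil; exact: gen_0.
rewrite big_cons; apply: gen_add; first by apply: h; rewrite inE eqxx.
by apply: IH => i hi; apply: h; rewrite inE hi orbT.
Qed.
End Gen.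

Lemma subsubr (V : zmodType) (p q r : V) : (p - q) - (r - q) = p - r.
Proof. by rewrite opprB addrA subrK. Qed.

Section Main.
Variables (S : finType) (d : nat) (A : S -> (site d -> S) -> Prop).
Hypothesis locA : local_rule A.
Local Notation X := (TMS A).

Lemma X_shift u t : X u -> X (fun i => u (i + t)).
Proof.
move=> Xu k; have := Xu (k + t).
suff -> : (fun j => u (k + j + t)) = (fun j => u (k + t + j)) by [].
by apply: functional_extensionality => j; rewrite addrAC.
Qed.

Lemma X_agree (w : site d -> S) :
  (forall k, exists u, X u /\ forall j : site d, (supnorm j <= 1)%N -> w (k + j) = u (k + j)) -> X w.
Proof.
move=> h k; case: (h k) => u [Xu hu]; have := Xu k.
have e : w k = u k by have := hu 0; rewrite addr0 supnorm0; apply.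
rewrite e => HA. refine (proj1 (locA (u k) _) HA) => j [hb _].
rewrite /ball subr0 in hb; by rewrite hu.
Qed.

Variable Z : {set S}.
Hypothesis HZi : forall x (z : S), X x -> z \in Z ->
        X (fun i => if i == 0 then z else x i).
Hypothesis HZii : forall a : site d -> S, pattern_in X (ball 0 1) a ->
        (forall i, ball 0 1 i -> i != 0 -> a i \in Z) ->
        forall s : S, pattern_in X (ball 0 1) (fun i => if i == 0 then s else a i).
Variable z : S.
Hypothesis zZ : z \in Z.

Lemma X_set u j : X u -> X (fun i => if i == j then z else u i).
Proof.
move=> Xu; have := X_shift (- j) (HZi (X_shift j Xu) zZ).
suff -> : (fun i => if i + - j == 0 then z else u (i + - j + j)) =
          (fun i => if i == j then z else u i) by [].
by apply: functional_extensionality => i; rewrite subrK subr_eq0.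
Qed.

Lemma X_setl (l : seq (site d)) u : X u -> X (fun i => if i \in l then z else u i).
Proof.
elim: l => [|j l IH] Xu.
  by suff -> : (fun i => if i \in [::] then z else u i) = u.
have := X_set j (IH Xu).
suff -> : (fun i => if i == j then z else if i \in l then z else u i) =
          (fun i => if i \in j :: l then z else u i) by [].
by apply: functional_extensionality => i; rewrite inE; case: (i == j).
Qed.

Lemma construct (x : site d -> S) (s : S) : X x ->
  X (fun i => if i == 0 then s else if i \in cube d 2 then z else x i).
Proof.
move=> Xx.
set x1 := fun i => if i \in cube d 2 then z else x i.
have Xx1 : X x1 by exact: (X_setl (cube d 2) Xx).
have x1z : forall i : site d, (supnorm i <= 2)%N -> x1 i = z.
  by move=> i hi; rewrite /x1 in_cube hi.
have [y [Xy hy]] : pattern_in X (ball 0 1) (fun i => if i == 0 then s else x1 i).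
  apply: HZii; first by exists x1.
  move=> i hi _; rewrite /ball subr0 in hi; rewrite x1z //; exact: leq_trans hi _.
set y1 := fun i => if i \in (cube d 2 `\` cube d 1)%fset then z else y i.
have Xy1 : X y1 by exact: (X_setl (cube d 2 `\` cube d 1)%fset Xy).
apply: X_agree => k.
case: (leqP (supnorm k) 1) => hk.
  exists y1; split => // j hj.
  have hi : (supnorm (k + j)%R <= 2)%N by apply: leq_trans (@supnormD d k j) _; exact: (leq_add hk hj).
  move: (k + j) hi => i hi.
  rewrite /y1 !inE !in_cube hi /=.
  case: eqP => [-> | /eqP ni0].
    rewrite supnorm0 /=; rewrite hy ?eqxx // /ball subr0 supnorm0 //.
  case: leqP => h1 /=; last by [].
  by rewrite hy /ball ?subr0 // (negbTE ni0) x1z.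
exists x1; split => // j hj.
have : k + j != 0.
  apply/eqP => e; move: hk; rewrite (_ : k = - j); first by rewrite supnormN ltnNge hj.
  by apply/eqP; rewrite -subr_eq0 opprK e.
by move/negbTE => ->.
Qed.

Lemma bd_cube3 j : boundary (fmem (cube d 3)) j -> ~~ (supnorm j <= 2)%N.
Proof.
move=> [_ hni]; apply/negP => hj; apply: hni; split.
  by rewrite /fmem in_cube; exact: leq_trans hj _.
move=> k hk; rewrite /fmem in_cube; rewrite /ball in hk.
have -> : k = (k - j) + j by rewrite subrK.
by apply: leq_trans (@supnormD d _ _) _; exact: (leq_add hk hj).
Qed.

Definition Hs := H_sharp X.

Lemma PsiF_exp (F : {fset site d}) (p q : site d -> S) :
  PsiF F p q = \sum_(j <- F) ((sharp (q j) - sharp z) - (sharp (p j) - sharp z)).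
Proof. by apply: eq_bigr => j _; rewrite subsubr. Qed.

Lemma E_in_H u j : X u -> Hs (sharp (u j) - sharp z).
Proof.
move=> Xu.
set u' := fun i => if i == j then z else u i.
have Xu' : X u' by exact: X_set.
have g : Hs (PsiF [fset j]%fset u u').
  apply: gen_in; exists u, u'; split => //; split => //; exists [fset j]%fset; split => //.
  by move=> i; rewrite in_fset1 /u' => /negbTE ->.
rewrite /PsiF big_seq_fset1 /u' eqxx in g.
by rewrite -opprB; exact: gen_opp.
Qed.

Theorem main_mho : cond_mho X.
Proof.
exists (cube d 3) => a [x [Xx hx]] v.
set G := gen _.
have Cs : forall s, G (sharp s - sharp z).
  move=> s.
  set ws := fun i => if i == 0 then s else if i \in cube d 2 then z else x i.
  set wz := fun i => if i == 0 then z else if i \in cube d 2 then z else x i.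
  have gen_w : forall w, X w -> (forall j, boundary (fmem (cube d 3)) j -> w j = x j) -> G (PsiF (cube d 3) a w).
    move=> w Xw hw; apply: gen_in; exists w; split; first by exists w.
    split => //; move=> j hj; rewrite hw // -hx //; by case: hj.
  have bdw : forall t j, boundary (fmem (cube d 3)) j ->
     (fun i => if i == 0 then t else if i \in cube d 2 then z else x i) j = x j.
    move=> t j /bd_cube3 hj /=.
    have -> : (j == 0) = false.
      by apply/negbTE/eqP => e; move: hj; rewrite e supnorm0.
    by rewrite in_cube (negbTE hj).
  have := gen_sub (gen_w ws (@construct x s Xx) (bdw s)) (gen_w wz (@construct x z Xx) (bdw z)).
  congr G.
  rewrite /PsiF -sumrB (eq_bigr (fun j => sharp (ws j) - sharp (wz j))); last first.
    by move=> j _; rewrite subsubr.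
  rewrite (bigD1_seq 0) ?fset_uniq ?cube0 //= /ws /wz eqxx big1 ?addr0 //.
  by move=> j /negbTE ->; rewrite subrr.
split.
- elim => [w [b [[y [Xy hy]] [hb ->]]] | | u w _ IHu _ IHw]; last first.
  + exact: gen_sub.
  + exact: gen_0.
  rewrite PsiF_exp; apply: gen_sum => j jF.
  rewrite -(hx j jF) -(hy j jF).
  exact: gen_sub (E_in_H j Xy) (E_in_H j Xx).
- elim => [w [x' [y' [_ [_ [F' [_ ->]]]]]] | | u w _ IHu _ IHw]; last first.
  + exact: gen_sub.
  + exact: gen_0.
  rewrite PsiF_exp; apply: gen_sum => j _.
  exact: gen_sub (Cs _) (Cs _).
Qed.
End Main.

Theorem proposition3p2 (S : finType) (d : nat) (A : S -> (site d -> S) -> Prop) :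
  local_rule A -> cond_maltese (TMS A) -> cond_mho (TMS A).
Proof.
move=> locA [Z [Z0 [HZi HZii]]].
case/set0Pn: Z0 => z zZ.
exact: (main_mho locA HZi HZii zZ).
Qed.
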